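(* For every $t \ge t_1$ and $p\ge 0$ we have $H_0^p(L^t)=H_0^p(K^t)$, but the equality $H_k^p(L^t)=H_k^p(K^t)$ does not hold in general for $1\le k \le \dim(K)-1$.
   Context: Let $X$ be a finite set and $(\mathcal{P}^{t_m})_{m\le M}$ a (not necessarily hierarchical) sequence of partitions of $X$ indexed by scales $t_1<t_2<\dots<t_M$; write $x\sim_t y$ if $x,y$ lie in the same cluster of the partition $\mathcal{P}^t$ at scale $t$ (the scale function being piecewise constant, $\mathcal{P}^t=\mathcal{P}^{t_m}$ for $t_m\le t<t_{m+1}$). The Multiscale Clustering Filtration (MCF) is $K^{t_m}=\bigcup_{l\le m}\{\Delta C : C\in\mathcal{P}^{t_l}\}$, where $\Delta C$ is the solid simplex of all non-empty subsets of $C$; its continuous-indexed version is $K^t=K^{t_m}$ for the largest $t_m\le t$, and $K:=K^{t_M}$. The Cluster Assignment Graph (CAG) is the undirected weighted graph on vertex set $X$ with adjacency matrix $A_{xy}=\min\{t\ge t_1 : x\sim_t y\}$ (with $\min\emptyset=0$, meaning $x,y$ are not linked if never in a common cluster). For $t\ge t_1$, $L^t$ is the clique complex of the thresholded CAG $G_t=(X,E_t)$ containing only the edges $\{x,y\}$ with $A_{xy}\le t$, giving the clique complex filtration $\mathcal{L}=(L^t)_{t\ge t_1}$. $H_k^p(\cdot)$ denotes the $p$-persistent $k$-th homology group (computed over $\mathbb{Z}_2$) along the respective filtration. *)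

(* Defs.v *)
From HB Require Import structures.
From mathcomp Require Import all_boot all_order all_algebra all_fingroup.
From mathcomp Require Import reals.
Set Implicit Arguments. Unset Strict Implicit. Unset Printing Implicit Defensive.
Import Order.TTheory GRing.Theory Num.Theory.
Local Open Scope ring_scope.

(* finite vertex set X.  A complex is a set of non-empty simplices         *)
(* (subsets of X).  Chains live in the row space 'rV['F_2]_N indexed by    *)
(* all subsets of X (N = #|{set X}|); the boundary matrix acts on the      *)
(* right (row i of bd is the boundary of simplex i).                       *)
Section Homology.
Variable X : finType.

Definition nS := #|{: {set X}}|.
Definition sx (i : 'I_nS) : {set X} := enum_val i.

Definition bd : 'M['F_2]_nS :=
  \matrix_(i, j) (((sx j \subset sx i) && ((#|sx j|.+1 == #|sx i|)%N)
                   && (sx j != set0)) : nat)%:R.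

(* projector whose row space is C_k(K): span of the k-simplices of K *)
Definition chains (K : {set {set X}}) (k : nat) : 'M['F_2]_nS :=
  diag_mx (\row_i (((sx i \in K) && ((#|sx i| == k.+1)%N)) : nat)%:R).

Definition cycles K k : 'M['F_2]_nS := (chains K k :&: kermx bd)%MS.
Definition bnds K k : 'M['F_2]_nS := (chains K k.+1 *m bd)%MS.

(* dimension over Z_2 of the persistent homology group
   H_k^{K -> K'} = Z_k(K) / (Z_k(K) \cap B_k(K'))   (for K \subset K') *)
Definition pers_betti (K K' : {set {set X}}) (k : nat) : nat :=
  (\rank (cycles K k) - \rank (cycles K k :&: bnds K' k))%N.

Definition cplx_dim (K : {set {set X}}) : nat := ((\max_(s in K) #|s|).-1)%N.

End Homology.

(* Partitions P^{t_0},...,P^{t_n} (n+1 of them, t_0 is the paper's t_1).   *)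
Section MCF.
Variables (X : finType) (R : realType) (n : nat).
Variables (P : 'I_n.+1 -> {set {set X}}) (ts : 'I_n.+1 -> R).

Definition valid_seq : Prop :=
  (forall m, partition (P m) [set: X]) /\ (forall i j : 'I_n.+1, (i < j)%N -> ts i < ts j).

Definition solid (C : {set X}) : {set {set X}} := powerset C :\ set0.

Definition mcf (t : R) : {set {set X}} :=
  \bigcup_(m | ts m <= t) \bigcup_(C in P m) solid C.

Definition same (m : 'I_n.+1) (x y : X) : bool :=
  [exists C in P m, (x \in C) && (y \in C)].
Definition linked (x y : X) : bool := [exists m, same m x y].

(* CAG adjacency: A_xy = min { t >= t_1 : x ~_t y }, with min of empty = 0 *)
Definition cag (x y : X) : R :=
  if linked x y then \big[Order.min/ts ord_max]_(m | same m x y) ts m else 0.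

(* edges of the thresholded CAG G_t (never-linked pairs are not edges) *)
Definition cag_edge (t : R) (x y : X) : bool := linked x y && (cag x y <= t).

Definition clique_cplx (t : R) : {set {set X}} :=
  [set s : {set X} | (s != set0) &&
     [forall x in s, forall y in s, (x != y) ==> cag_edge t x y]].

End MCF.

(* Main.v *)
Require Import Defs.
From HB Require Import structures.
From mathcomp Require Import all_boot all_order all_algebra all_fingroup.
From mathcomp Require Import reals.
Import Order.TTheory GRing.Theory Num.Theory.
Local Open Scope ring_scope.

Section Gen.
Variables (X : finType) (R : realType) (n : nat).
Variables (P : 'I_n.+1 -> {set {set X}}) (ts : 'I_n.+1 -> R).
Hypothesis Hv : valid_seq P ts.

Lemma ts_le_max m : ts m <= ts ord_max.
Proof.
case: Hv => _ Hmono; have := leq_ord m; rewrite leq_eqVlt; case/orP => [/eqP e|lt].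
  by have -> : m = ord_max by apply/val_inj.
by apply/ltW/Hmono.
Qed.

Lemma same_sym m x y : same P m x y = same P m y x.
Proof. rewrite /same; apply: eq_existsb => C; by case: (C \in P m); case: (x \in C); case: (y \in C). Qed.

Lemma cag_edgeP t x y :
  cag_edge P ts t x y = [exists m, (ts m <= t) && same P m x y].
Proof.
rewrite /cag_edge /cag; case: (boolP (linked P x y)) => [/existsP[m0 Hm0]|nl] /=.
  apply/idP/idP.
    move=> Hle; case: (boolP [exists m, (ts m <= t) && same P m x y]) => [//|/existsPn H].
    exfalso.
    have : t < \big[Order.min/ts ord_max]_(m | same P m x y) ts m.
      apply: (big_ind (fun v => t < v)).
      - have := H m0; rewrite Hm0 andbT -ltNge => h; exact: lt_le_trans h (ts_le_max m0).
      - by move=> a b ha hb; rewrite lt_min ha hb.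
      - by move=> m Hm; have := H m; rewrite Hm andbT -ltNge.
    by rewrite ltNge Hle.
  case/existsP=> m /andP[Hm Hs]; apply: le_trans Hm.
  by rewrite (bigD1 m) //= ge_min lexx.
apply/esym/negbTE/existsPn => m; apply/negP => /andP[_ Hs].
by move/existsPn: nl => /(_ m); rewrite Hs.
Qed.

Lemma mem_small t (Ht : ts ord0 <= t) (s : {set X}) :
  (#|s| == 1)%N || (#|s| == 2)%N -> (s \in clique_cplx P ts t) = (s \in mcf P ts t).
Proof.
case/orP.
  case/cards1P => x ->; rewrite inE.
  have -> : [set x] != set0 by apply/set0Pn; exists x; rewrite set11.
  have -> /= : [forall x0 in [set x], forall y in [set x], (x0 != y) ==> cag_edge P ts t x0 y].
    apply/forallP => a; apply/implyP => /set1P ->; apply/forallP => b.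
    by apply/implyP => /set1P ->; rewrite eqxx.
  apply/esym/bigcupP; exists ord0 => //.
  case: Hv => /(_ ord0) /and3P[/eqP Hc _ _] _.
  have : x \in cover (P ord0) by rewrite Hc inE.
  case/bigcupP => C HC xC; apply/bigcupP; exists C => //.
  rewrite /solid in_setD1 powersetE sub1set xC andbT.
  by apply/eqP/setP => /(_ x); rewrite set11 inE.
case/cards2P => x [y [nxy ->]].
have ne : [set x; y] != set0 by apply/set0Pn; exists x; exact: set21.
transitivity [exists m, (ts m <= t) && same P m x y].
  rewrite inE ne /=; apply/idP/idP.
    move/forallP/(_ x)/implyP/(_ (set21 x y))/forallP/(_ y)/implyP/(_ (set22 x y)).
    by move/implyP/(_ nxy); rewrite cag_edgeP.
  move=> HE; apply/forallP => a; apply/implyP => /set2P[]->; apply/forallP => b;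
    apply/implyP => /set2P[]->; rewrite ?eqxx //=; apply/implyP => _; rewrite cag_edgeP //.
  by case/existsP: HE => m /andP[h1 h2]; apply/existsP; exists m; rewrite h1 same_sym.
apply/idP/bigcupP.
  case/existsP => m /andP[Hm /existsP[C /and3P[HC xC yC]]].
  exists m => //; apply/bigcupP; exists C => //.
  by rewrite /solid in_setD1 powersetE ne subUset !sub1set xC yC.
case=> m Hm /bigcupP[C HC]; rewrite /solid in_setD1 powersetE => /andP[_ sub].
apply/existsP; exists m; rewrite Hm /=; apply/existsP; exists C.
by rewrite HC !(subsetP sub) ?set21 ?set22.
Qed.

Lemma chains_eq t (Ht : ts ord0 <= t) j : (j <= 1)%N ->
  chains (clique_cplx P ts t) j = chains (mcf P ts t) j.
Proof.
move=> hj; rewrite /chains; congr diag_mx; apply/rowP => i; rewrite !mxE.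
case: (boolP (#|sx i| == j.+1)) => h; rewrite ?andbF ?andbT //.
rewrite mem_small //; move/eqP: h => ->.
by case: j hj => [|[|]].
Qed.

End Gen.

Lemma part1 (R : realType) :
  (forall (X : finType) (n : nat) (P : 'I_n.+1 -> {set {set X}})
          (ts : 'I_n.+1 -> R),
     valid_seq P ts ->
     forall t p : R, ts ord0 <= t -> 0 <= p ->
       pers_betti (clique_cplx P ts t) (clique_cplx P ts (t + p)) 0
       = pers_betti (mcf P ts t) (mcf P ts (t + p)) 0).
Proof.
move=> X n P ts Hv t p Ht Hp.
have Htp : ts ord0 <= t + p by apply: le_trans Ht _; rewrite lerDl.
by rewrite /pers_betti /cycles /bnds !chains_eq.
Qed.
Section Ex.
Variables (R : realType) (k : nat).
Hypothesis hk : (1 <= k)%N.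

Definition Pk (m : 'I_k.+3) : {set {set 'I_k.+2}} :=
  if (m < k.+2)%N then [set [set~ (inord m : 'I_k.+2)]; [set inord m]] else [set setT].
Definition tsk (m : 'I_k.+3) : R := (m : nat)%:R.

Lemma valid_k : valid_seq Pk tsk.
Proof.
split; last by move=> i j hij; rewrite /tsk ltr_nat.
move=> m; rewrite /Pk; case: ifP => _.
  set a : 'I_k.+2 := inord m.
  apply/and3P; split.
  - apply/eqP/setP => x; rewrite inE; apply/bigcupP.
    case: (eqVneq x a) => [->|hx].
      by exists [set a]; rewrite ?set22 ?set11.
    by exists [set~ a]; rewrite ?set21 // !inE hx.
  - apply/trivIsetP => A B /set2P[]-> /set2P[]->; rewrite ?eqxx //= => _.
      by rewrite disjoint_sym disjoints1 !inE eqxx.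
    by rewrite disjoints1 !inE eqxx.
  - apply/negP => /set2P[] /(congr1 (fun S : {set 'I_k.+2} => #|S|)).
      by rewrite cards0 cardsC1 card_ord.
    by rewrite cards0 cards1.
apply/and3P; split.
- by rewrite cover1.
- exact: trivIset1.
- apply/negP => /set1P /(congr1 (fun S : {set 'I_k.+2} => #|S|)).
  by rewrite cards0 cardsT card_ord.
Qed.

Definition tk : R := (k.+1)%:R.

Lemma F1 (s : {set 'I_k.+2}) : s \in mcf Pk tsk tk -> (#|s| <= k.+1)%N.
Proof.
case/bigcupP => m; rewrite /tsk /tk ler_nat => hm /bigcupP[C].
rewrite /Pk ltnS hm /solid in_setD1 powersetE => /set2P[]-> /andP[_ sub];
  apply: leq_trans (subset_leq_card sub) _.
  by rewrite cardsC1 card_ord.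
by rewrite cards1.
Qed.

Lemma F2 (s : {set 'I_k.+2}) : #|s| = k.+1 -> s \in mcf Pk tsk tk.
Proof.
move=> hs.
have : #|~: s| == 1%N.
  have h : (#|s| + #|~: s| = k.+2)%N by rewrite cardsC card_ord.
  move: h; rewrite hs => h.
  by rewrite -(eqn_add2l k.+1) h addn1.
case/cards1P => a ha.
have es : s = [set~ a] by rewrite -ha setCK.
have ha3 : (a < k.+3)%N by apply: leq_trans (ltn_ord a) _.
apply/bigcupP; exists (inord a); first by rewrite /tsk /tk inordK // ler_nat -ltnS.
apply/bigcupP; exists [set~ a].
  by rewrite /Pk inordK // ltn_ord inord_val set21.
rewrite /solid in_setD1 powersetE es subxx andbT.
by apply/negP => /eqP /(congr1 (fun S : {set 'I_k.+2} => #|S|)); rewrite cards0 cardsC1 card_ord.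
Qed.

Lemma F3 (s : {set 'I_k.+2}) : s != set0 -> s \in clique_cplx Pk tsk tk.
Proof.
move=> ne; rewrite inE ne /=.
apply/forallP => x; apply/implyP => _; apply/forallP => y; apply/implyP => _.
apply/implyP => nxy; rewrite cag_edgeP; last exact: valid_k.
have : ~: [set x; y] != set0.
  apply/negP => /eqP /(congr1 (fun S : {set 'I_k.+2} => #|S|)) h.
  have := cardsC [set x; y]; rewrite h cards0 cards2 nxy card_ord addn0 => /eqP.
  by rewrite eqSS; case: k hk.
case/set0Pn => a; rewrite !inE negb_or => /andP[ax ay].
have ha3 : (a < k.+3)%N by apply: leq_trans (ltn_ord a) _.
apply/existsP; exists (inord a); rewrite /tsk /tk inordK // ler_nat -ltnS ltn_ord /=.
apply/existsP; exists [set~ a].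
by rewrite /Pk inordK // ltn_ord !inE inord_val eqxx /= [x == _]eq_sym [y == _]eq_sym ax ay.
Qed.

Lemma F4 : [set: 'I_k.+2] \in mcf Pk tsk (tsk ord_max).
Proof.
apply/bigcupP; exists ord_max => //; apply/bigcupP; exists setT.
  by rewrite /Pk ltnn set11.
rewrite /solid in_setD1 powersetE subxx andbT.
by apply/negP => /eqP /(congr1 (fun S : {set 'I_k.+2} => #|S|)); rewrite cards0 cardsT card_ord.
Qed.


Lemma sum_sx (X : finType) (F : {set X} -> nat) :
  (\sum_(j < nS X) F (sx j) = \sum_S F S)%N.
Proof. by rewrite /nS /sx -big_enum_val; apply: eq_bigl. Qed.

Lemma sxK (X : finType) (S : {set X}) : sx (enum_rank S : 'I_(nS X)) = S.
Proof. exact: enum_rankK. Qed.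

Definition T0 := [set: 'I_k.+2].
Definition iT : 'I_(nS 'I_k.+2) := enum_rank T0.
Definition v := row iT (bd 'I_k.+2).

Lemma cardT0 : #|T0| = k.+2.
Proof. by rewrite cardsT card_ord. Qed.

Lemma M2 : v *m bd 'I_k.+2 = 0.
Proof.
rewrite /v -row_mul; apply/rowP => l; rewrite !mxE.
under eq_bigr => j _ do rewrite !mxE -natrM mulnb /iT sxK.
rewrite -natr_sum.
rewrite (@sum_sx _ (fun S => (((S \subset T0) && (#|S|.+1 == #|T0|) && (S != set0))
   && ((sx l \subset S) && (#|sx l|.+1 == #|S|) && (sx l != set0)) : nat))).
set L := sx l.
case: (boolP ((L != set0) && (#|L| == k))) => [/andP[nL /eqP cL] | h]; last first.
  rewrite big1 // => S _; apply/eqP; rewrite eqb0; apply/negP.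
  move=> /andP[/andP[/andP[_ /eqP e1] _] /andP[/andP[_ /eqP e2] nL]].
  rewrite -e2 cardT0 in e1; move: h; rewrite nL /=; case: e1 => ->; by rewrite eqxx.
have -> : (\sum_(S : {set 'I_k.+2}) (((S \subset T0) && (#|S|.+1 == #|T0|) && (S != set0))
   && ((L \subset S) && (#|L|.+1 == #|S|) && (L != set0)) : nat)
   = #|[set S : {set 'I_k.+2} | (L \subset S) && (#|L|.+1 == #|S|)]|)%N.
  rewrite -[in RHS]sum1dep_card [in RHS]big_mkcond /=; apply: eq_bigr => S _.
  case: (boolP ((L \subset S) && (#|L|.+1 == #|S|))) => [/andP[h1 /eqP h2]|h]; last first.
    by rewrite /= ?andbF.
  rewrite nL cardT0 -h2 cL eqxx subsetT /=.
  suff -> : S != set0 by [].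
  by apply/set0Pn; case/set0Pn: nL => x xL; exists x; exact: (subsetP h1).
have -> : [set S : {set 'I_k.+2} | (L \subset S) && (#|L|.+1 == #|S|)]
    = [set x |: L | x in ~: L].
  apply/setP => S; rewrite inE; apply/andP/imsetP.
    case=> LS /eqP cS.
    have : #|S :\: L| == 1%N by rewrite cardsDS // -cS subSnn.
    case/cards1P => x hx.
    have xSL : x \in S :\: L by rewrite hx set11.
    exists x; first by move: xSL; rewrite !inE => /andP[].
    apply/setP => y; rewrite in_setU1.
    case: (eqVneq y x) => [->|nyx] /=; first by move: xSL; rewrite inE => /andP[_ ->].
    apply/idP/idP => [yS|yL]; last exact: (subsetP LS).
    apply/negPn/negP => nyL.
    have : y \in S :\: L by rewrite inE nyL.
    by rewrite hx inE (negbTE nyx).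
  case=> x; rewrite inE => xL ->; split; first exact: subsetUr.
  by rewrite cardsU1 xL.
rewrite card_in_imset; last first.
  move=> x y; rewrite !inE => xL yL e.
  have : x \in y |: L by rewrite -e setU11.
  by rewrite in_setU1 (negbTE xL) orbF => /eqP.
have : (#|L| + #|~: L| = k.+2)%N by rewrite cardsC card_ord.
rewrite cL => H.
have -> : #|~: L| = 2%N by apply/eqP; rewrite -(eqn_add2l k) H addn2.
by apply/eqP.
Qed.


Lemma M1 : (v <= chains (mcf Pk tsk tk) k)%MS.
Proof.
have -> : v = v *m chains (mcf Pk tsk tk) k.
  rewrite /chains mul_mx_diag; apply/matrixP => i j; rewrite !mxE.
  case: (boolP ((sx j \subset sx iT) && (#|sx j|.+1 == #|sx iT|) && (sx j != set0))) => h;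
    first last.
    by rewrite mul0r.
  move: h; rewrite /iT sxK cardT0 => /andP[/andP[_ /eqP [e]] _].
  by rewrite F2 // e eqxx mulr1.
exact: submxMl.
Qed.

Lemma M3 : (v <= chains (clique_cplx Pk tsk tk) k.+1 *m bd 'I_k.+2)%MS.
Proof.
rewrite /v rowE.
have -> : (delta_mx 0 iT : 'rV['F_2]_(nS 'I_k.+2)) = delta_mx 0 iT *m chains (clique_cplx Pk tsk tk) k.+1.
  rewrite /chains mul_mx_diag; apply/matrixP => i j; rewrite !mxE.
  case: (eqVneq j iT) => [->|nj]; last by rewrite andbF mul0r.
  rewrite /iT sxK F3 ?cardT0 ?eqxx ?mulr1 //.
  by apply/set0Pn; exists ord0; rewrite inE.
by rewrite -mulmxA; exact: submxMl.
Qed.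

Lemma M4 : v != 0.
Proof.
apply/eqP => /rowP/(_ (enum_rank [set~ (ord0 : 'I_k.+2)])); rewrite !mxE /iT !sxK.
rewrite subsetT cardsC1 cardT0 card_ord eqxx /=.
have -> : [set~ (ord0 : 'I_k.+2)] != set0.
  by apply/set0Pn; exists ord_max; rewrite !inE.
by move/eqP.
Qed.

Lemma M5 : chains (mcf Pk tsk tk) k.+1 = 0.
Proof.
apply/matrixP => i j; rewrite !mxE.
rewrite (_ : (_ && _) = false) ?mul0rn //.
apply/negbTE/negP => /andP[/F1 h /eqP e]; by rewrite e ltnn in h.
Qed.

Lemma M6 : chains (clique_cplx Pk tsk tk) k = chains (mcf Pk tsk tk) k.
Proof.
rewrite /chains; congr diag_mx; apply/rowP => j; rewrite !mxE.
case: (boolP (#|sx j| == k.+1)) => h; rewrite ?andbF ?andbT //.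
rewrite F3 ?F2 //; first exact/eqP.
by rewrite -card_gt0 (eqP h).
Qed.

End Ex.

Theorem proposition6 (R : realType) :
  (forall (X : finType) (n : nat) (P : 'I_n.+1 -> {set {set X}})
          (ts : 'I_n.+1 -> R),
     valid_seq P ts ->
     forall t p : R, ts ord0 <= t -> 0 <= p ->
       pers_betti (clique_cplx P ts t) (clique_cplx P ts (t + p)) 0
       = pers_betti (mcf P ts t) (mcf P ts (t + p)) 0)
  /\
  (forall k : nat, (1 <= k)%N ->
     exists (X : finType) (n : nat) (P : 'I_n.+1 -> {set {set X}})
            (ts : 'I_n.+1 -> R),
       [/\ valid_seq P ts,
           (k <= cplx_dim (mcf P ts (ts ord_max)) - 1)%N &
           exists t p : R, [/\ ts ord0 <= t, 0 <= p &
             pers_betti (clique_cplx P ts t) (clique_cplx P ts (t + p)) k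
             <> pers_betti (mcf P ts t) (mcf P ts (t + p)) k]]).
Proof.
split; first exact: part1.
move=> k hk.
exists ('I_k.+2 : finType), k.+2, (Pk k), (tsk R k); split.
- exact: valid_k.
- rewrite /cplx_dim.
  have : (k.+2 <= \max_(s in mcf (Pk k) (tsk R k) (tsk R k ord_max)) #|s|)%N.
    have h := (@leq_bigmax_cond _ (fun s => s \in mcf (Pk k) (tsk R k) (tsk R k ord_max))
              (fun s => #|s|) (T0 k) (F4 R k)).
    by rewrite cardT0 in h.
  case: (\max_(s in _) _)%N => // m; rewrite ltnS /= => h.
  by case: m h => // m; rewrite ltnS subn1 /=.
exists (tk R k), 0; split.
- by rewrite /tsk /tk ler_nat.
- by [].
rewrite addr0 /pers_betti /cycles /bnds (M6 R k hk) (M5 R k) mul0mx capmx0 mxrank0 subn0.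
set Z := (chains _ k :&: kermx _)%MS.
set B := (chains _ k.+1 *m _)%MS.
have hv : (v k <= Z :&: B)%MS.
  rewrite sub_capmx (M3 R k hk) andbT sub_capmx (M1 R k) /=.
  by rewrite sub_kermx (M2 k).
have r1 := mxrankS hv.
have r0 : (0 < \rank (v k))%N by rewrite lt0n mxrank_eq0 (M4 k).
have r2 := mxrankS (capmxSl Z B).
move=> e.
have : (\rank Z - \rank (Z :&: B) < \rank Z)%N.
  rewrite ltn_subrL; apply/andP; split; first exact: leq_trans r0 r1.
  exact: leq_trans r0 (leq_trans r1 r2).
by rewrite e ltnn.
Qed.
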